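(* Let $\mathbb{H}=\{x+iy:y>0\}$ and let $\varphi:\mathbb{H}\to\mathbb{C}$ be holomorphic with $\varphi'$ nonvanishing and $$\sup_{x+iy\in\mathbb{H}} y\left|\frac{\varphi''(x+iy)}{\varphi'(x+iy)}\right|<\frac12.$$ For $\alpha>0$ let $L_\alpha=\{x+iy\in\mathbb{H}: y|\varphi'(x+iy)|=\alpha\}$. Then $L_\alpha$ is the graph $\{x+if_\alpha(x):x\in\mathbb{R}\}$ of a Lipschitz function $f_\alpha:\mathbb{R}\to(0,\infty)$. *)

(* Defs.v *)
From Stdlib Require Import Reals.
Open Scope R_scope.

Definition Cx : Type := (R * R)%type.
Definition Re (z : Cx) : R := fst z.
Definition Im (z : Cx) : R := snd z.
Definition Cadd (z w : Cx) : Cx := (Re z + Re w, Im z + Im w).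
Definition Csub (z w : Cx) : Cx := (Re z - Re w, Im z - Im w).
Definition Cmul (z w : Cx) : Cx :=
  (Re z * Re w - Im z * Im w, Re z * Im w + Im z * Re w).
Definition Cinv (z : Cx) : Cx :=
  (Re z / (Re z ^ 2 + Im z ^ 2), - Im z / (Re z ^ 2 + Im z ^ 2)).
Definition Cdiv (z w : Cx) : Cx := Cmul z (Cinv w).
Definition Cmod (z : Cx) : R := sqrt (Re z ^ 2 + Im z ^ 2).
Definition C0 : Cx := (0, 0).

Definition in_H (z : Cx) : Prop := 0 < Im z.

Definition has_cderiv (f : Cx -> Cx) (z d : Cx) : Prop :=
  forall eps : R, 0 < eps -> exists delta : R, 0 < delta /\
    forall h : Cx, h <> C0 -> Cmod h < delta ->
      Cmod (Csub (Cdiv (Csub (f (Cadd z h)) (f z)) h) d) < eps.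

Definition Lipschitz (f : R -> R) : Prop :=
  exists K : R, forall x y : R, Rabs (f x - f y) <= K * Rabs (x - y).

(* Main.v *)
Require Import Defs.
From Stdlib Require Import Reals Lra Psatz ClassicalEpsilon FunctionalExtensionality.
Open Scope R_scope.

Lemma Rabs_Re_le z : Rabs (Re z) <= Cmod z.
Proof.
  unfold Cmod. rewrite <- sqrt_Rsqr_abs. apply sqrt_le_1_alt. unfold Rsqr. nra.
Qed.
Lemma Rabs_Im_le z : Rabs (Im z) <= Cmod z.
Proof.
  unfold Cmod. rewrite <- sqrt_Rsqr_abs. apply sqrt_le_1_alt. unfold Rsqr. nra.
Qed.
Lemma Cmod_mul z w : Cmod (Cmul z w) = Cmod z * Cmod w.
Proof.
  destruct z as [p q], w as [c d].
  unfold Cmod, Cmul, Re, Im; simpl. rewrite <- sqrt_mult by nra. f_equal. ring.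
Qed.

Lemma chain (phi1 phi2 : Cx -> Cx) x0 y0 a b t
  (Hd : forall z, in_H z -> has_cderiv phi1 z (phi2 z)) (hb : 0 < b) (hy : 0 < y0 + t*b) :
  forall eps, 0 < eps -> exists delta, 0 < delta /\ forall h, h <> 0 -> Rabs h < delta ->
  Cmod (Csub (((Re (phi1 (x0+(t+h)*a, y0+(t+h)*b)) - Re (phi1 (x0+t*a, y0+t*b)))/h,
               (Im (phi1 (x0+(t+h)*a, y0+(t+h)*b)) - Im (phi1 (x0+t*a, y0+t*b)))/h))
             (Cmul (phi2 (x0+t*a, y0+t*b)) (a,b))) < eps.
Proof.
  intros eps he.
  set (z := (x0+t*a, y0+t*b)).
  assert (hw : 0 < Cmod (a,b)) by (unfold Cmod, Re, Im; simpl; apply sqrt_lt_R0; nra).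
  assert (hz : in_H z) by exact hy.
  destruct (Hd z hz (eps / Cmod (a,b))) as [d [hd Hdd]].
  { apply Rdiv_lt_0_compat; lra. }
  exists (d / Cmod (a,b)). split. { apply Rdiv_lt_0_compat; lra. }
  intros h hn hl.
  assert (hH : (h*a, h*b) <> C0).
  { intro E. injection E as E1 E2. apply hn. nra. }
  assert (hHm : Cmod (h*a, h*b) = Rabs h * Cmod (a,b)).
  { unfold Cmod, Re, Im; simpl. rewrite <- sqrt_Rsqr_abs, <- sqrt_mult.
    f_equal. unfold Rsqr; ring. unfold Rsqr; nra. nra. }
  assert (hlt : Cmod (h*a, h*b) < d).
  { rewrite hHm. assert (Cmod (a,b) * / Cmod (a,b) = 1) by (field; lra).
    unfold Rdiv in hl. nra. }
  specialize (Hdd (h*a,h*b) hH hlt).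
  replace (x0+(t+h)*a, y0+(t+h)*b) with (Cadd z (h*a,h*b))
    by (unfold Cadd, z, Re, Im; simpl; f_equal; ring).
  replace (Csub _ _) with
    (Cmul (Csub (Cdiv (Csub (phi1 (Cadd z (h * a, h * b))) (phi1 z)) (h * a, h * b)) (phi2 z)) (a,b)).
  { rewrite Cmod_mul. assert (eps / Cmod (a,b) * Cmod (a,b) = eps) by (field; lra). nra. }
  assert (hhh : 0 < h*h) by (destruct (Rtotal_order h 0) as [?|[?|?]]; [nra|contradiction|nra]).
  assert (0 < h*h*(b*b)) by (apply Rmult_lt_0_compat; nra).
  assert (hn2 : (h*a)^2 + (h*b)^2 <> 0) by (apply Rgt_not_eq; nra).
  destruct (phi1 (Cadd z (h * a, h * b))) as [c1 c2].
  destruct (phi1 z) as [e1 e2]. destruct (phi2 z) as [p q].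
  unfold Csub, Cdiv, Cmul, Cinv, Re, Im; simpl. f_equal; field.
  all: try split; auto. all: try nra.
Qed.

Lemma dRe (phi1 phi2 : Cx -> Cx) x0 y0 a b t
  (Hd : forall z, in_H z -> has_cderiv phi1 z (phi2 z)) (hb : 0 < b) (hy : 0 < y0 + t*b) :
  derivable_pt_lim (fun s => Re (phi1 (x0 + s*a, y0 + s*b))) t
    (Re (Cmul (phi2 (x0+t*a, y0+t*b)) (a,b))).
Proof.
  intros eps he. destruct (chain phi1 phi2 x0 y0 a b t Hd hb hy eps he) as [d [hd H]].
  exists (mkposreal d hd). intros h hn hl. specialize (H h hn hl).
  exact (Rle_lt_trans _ _ _ (Rabs_Re_le _) H).
Qed.
Lemma dIm (phi1 phi2 : Cx -> Cx) x0 y0 a b t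
  (Hd : forall z, in_H z -> has_cderiv phi1 z (phi2 z)) (hb : 0 < b) (hy : 0 < y0 + t*b) :
  derivable_pt_lim (fun s => Im (phi1 (x0 + s*a, y0 + s*b))) t
    (Im (Cmul (phi2 (x0+t*a, y0+t*b)) (a,b))).
Proof.
  intros eps he. destruct (chain phi1 phi2 x0 y0 a b t Hd hb hy eps he) as [d [hd H]].
  exists (mkposreal d hd). intros h hn hl. specialize (H h hn hl).
  exact (Rle_lt_trans _ _ _ (Rabs_Im_le _) H).
Qed.

Lemma dmul f g x lf lg : derivable_pt_lim f x lf -> derivable_pt_lim g x lg ->
  derivable_pt_lim (fun s => f s * g s) x (lf * g x + f x * lg).
Proof. intros. exact (derivable_pt_lim_mult f g x lf lg H H0). Qed.
Lemma dadd f g x lf lg : derivable_pt_lim f x lf -> derivable_pt_lim g x lg ->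
  derivable_pt_lim (fun s => f s + g s) x (lf + lg).
Proof. intros. exact (derivable_pt_lim_plus f g x lf lg H H0). Qed.
Lemma daff y0 b t : derivable_pt_lim (fun s => y0 + s*b) t b.
Proof.
  intros eps he. exists (mkposreal 1 Rlt_0_1). intros h hn hl. simpl.
  replace ((y0 + (t + h) * b - (y0 + t * b)) / h - b) with 0 by (field; auto).
  rewrite Rabs_R0; lra.
Qed.

Definition NN (phi1 : Cx -> Cx) (p : Cx) :=
  Re (phi1 p) * Re (phi1 p) + Im (phi1 p) * Im (phi1 p).

Lemma dNN (phi1 phi2 : Cx -> Cx) x0 y0 a b t
  (Hd : forall z, in_H z -> has_cderiv phi1 z (phi2 z)) (hb : 0 < b) (hy : 0 < y0 + t*b) :
  let p := (x0+t*a, y0+t*b) in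
  derivable_pt_lim (fun s => NN phi1 (x0 + s*a, y0 + s*b)) t
    (2 * (Re (phi1 p) * Re (Cmul (phi2 p) (a,b)) + Im (phi1 p) * Im (Cmul (phi2 p) (a,b)))).
Proof.
  intro p. unfold NN.
  pose proof (dRe phi1 phi2 x0 y0 a b t Hd hb hy) as H1.
  pose proof (dIm phi1 phi2 x0 y0 a b t Hd hb hy) as H2.
  pose proof (dadd _ _ _ _ _ (dmul _ _ _ _ _ H1 H1) (dmul _ _ _ _ _ H2 H2)) as H3.
  simpl in H3. unfold p. 
  match goal with |- derivable_pt_lim _ _ ?l => replace l with
   (Re (Cmul (phi2 (x0 + t * a, y0 + t * b)) (a, b)) * Re (phi1 (x0 + t * a, y0 + t * b)) +
       Re (phi1 (x0 + t * a, y0 + t * b)) * Re (Cmul (phi2 (x0 + t * a, y0 + t * b)) (a, b)) +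
       (Im (Cmul (phi2 (x0 + t * a, y0 + t * b)) (a, b)) * Im (phi1 (x0 + t * a, y0 + t * b)) +
        Im (phi1 (x0 + t * a, y0 + t * b)) * Im (Cmul (phi2 (x0 + t * a, y0 + t * b)) (a, b)))) by ring end.
  exact H3.
Qed.
Lemma CS u v p q a b : (u*(p*a-q*b)+v*(p*b+q*a))^2 <= (u*u+v*v)*(p^2+q^2)*(a^2+b^2).
Proof.
  assert (E : (u*(p*a-q*b)+v*(p*b+q*a))^2 + (v*(p*a-q*b)-u*(p*b+q*a))^2 = (u*u+v*v)*(p^2+q^2)*(a^2+b^2)) by ring.
  rewrite <- E. pose proof (pow2_ge_0 (v*(p*a-q*b)-u*(p*b+q*a))). lra.
Qed.
Lemma pos_gen u v p q a b y M : 0 < y -> 0 <= M -> M < 1/2 -> 0 < u*u+v*v -> 0 < b -> a^2 <= b^2 ->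
  y^2*(p^2+q^2) <= M^2*(u*u+v*v) ->
  (y*(u*(p*a-q*b)+v*(p*b+q*a)))^2 <= 2 * M^2 * (u*u+v*v)^2 * b^2.
Proof.
  intros. pose proof (CS u v p q a b).
  set (S := u*(p*a-q*b)+v*(p*b+q*a)) in *. set (N := u*u+v*v) in *.
  replace ((y*S)^2) with (y^2 * S^2) by ring.
  apply Rle_trans with (y^2 * (N*(p^2+q^2)*(a^2+b^2))).
  { apply Rmult_le_compat_l; nra. }
  replace (y^2 * (N*(p^2+q^2)*(a^2+b^2))) with ((y^2*(p^2+q^2)) * (N * (a^2+b^2))) by ring.
  apply Rle_trans with ((M^2*N) * (N*(a^2+b^2))).
  { apply Rmult_le_compat_r; nra. }
  replace ((M^2*N) * (N*(a^2+b^2))) with ((M^2*N^2)*(a^2+b^2)) by ring.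
  replace (2 * M^2 * N^2 * b^2) with ((M^2*N^2)*(2*b^2)) by ring.
  apply Rmult_le_compat_l; nra.
Qed.
Lemma pos_vert u v p q y M : 0 < y -> 0 <= M -> M < 1/2 -> 0 < u*u+v*v ->
  y^2*(p^2+q^2) <= M^2*(u*u+v*v) ->
  0 < 1*(u*u+v*v) + y*(2*(u*(p*0-q*1)+v*(p*1+q*0))).
Proof.
  intros. pose proof (CS u v p q 0 1).
  set (S := u*(p*0-q*1)+v*(p*1+q*0)) in *. set (N := u*u+v*v) in *.
  assert (h1 : (y*S)^2 <= M^2 * N^2).
  { replace ((y*S)^2) with (y^2 * S^2) by ring.
    apply Rle_trans with (y^2 * (N*(p^2+q^2)*(0^2+1^2))).
    { apply Rmult_le_compat_l; nra. }
    replace (y^2 * (N*(p^2+q^2)*(0^2+1^2))) with ((y^2*(p^2+q^2)) * N) by ring.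
    apply Rle_trans with ((M^2*N) * N). { apply Rmult_le_compat_r; nra. } nra. }
  assert (M^2 < 1/4) by nra. assert (0 < N^2) by nra.
  assert (h2 : M^2 * N^2 < (N/2)^2).
  { replace ((N/2)^2) with (1/4 * N^2) by field. apply Rmult_lt_compat_r; lra. }
  nra.
Qed.
Lemma pos_diag u v p q a b y M : 0 < y -> 0 <= M -> M < 1/2 -> 0 < u*u+v*v -> 0 < b -> a^2 <= b^2 ->
  y^2*(p^2+q^2) <= M^2*(u*u+v*v) ->
  0 < b*(y*(u*u+v*v)) + y*(b*(u*u+v*v) + y*(2*(u*(p*a-q*b)+v*(p*b+q*a)))).
Proof.
  intros. pose proof (pos_gen u v p q a b y M H H0 H1 H2 H3 H4 H5).
  set (S := u*(p*a-q*b)+v*(p*b+q*a)) in *. set (N := u*u+v*v) in *.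
  assert (M^2 < 1/4) by nra. assert (0 < (N*b)^2) by (apply pow_lt; nra).
  assert (h2 : 2*M^2 * N^2 * b^2 < (N*b)^2).
  { replace (2*M^2 * N^2 * b^2) with ((2*M^2) * (N*b)^2) by ring.
    rewrite <- (Rmult_1_l ((N*b)^2)) at 2. apply Rmult_lt_compat_r; lra. }
  assert (ys2 : (y*S)^2 < (N*b)^2) by lra. assert (0 < N*b) by (apply Rmult_lt_0_compat; lra).
  assert (0 < N*b + y*S).
  { destruct (Rle_or_lt (N*b + y*S) 0); [exfalso|lra].
    assert (0 <= (-(y*S - N*b))*(-(y*S+N*b))) by (apply Rmult_le_pos; lra). nra. }
  nra.
Qed.

Lemma NN_pos (phi1 : Cx -> Cx) z : phi1 z <> C0 -> 0 < NN phi1 z.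
Proof.
  intro H. unfold NN. destruct (phi1 z) as [u v]. unfold Re, Im; simpl.
  destruct (Req_dec u 0) as [->|hu].
  - destruct (Req_dec v 0) as [->|hv]. { exfalso; apply H; reflexivity. }
    assert (0 < v*v) by (destruct (Rtotal_order v 0) as [?|[?|?]]; [nra|contradiction|nra]). nra.
  - assert (0 < u*u) by (destruct (Rtotal_order u 0) as [?|[?|?]]; [nra|contradiction|nra]). nra.
Qed.

Lemma bound (phi1 phi2 : Cx -> Cx) M (Hnz : forall z, in_H z -> phi1 z <> C0)
  (HM : forall z, in_H z -> Im z * Cmod (Cdiv (phi2 z) (phi1 z)) <= M) z :
  in_H z -> Im z ^2 * (Re (phi2 z)^2 + Im (phi2 z)^2) <= M^2 * NN phi1 z.
Proof.
  intros hz. specialize (HM z hz). pose proof (NN_pos phi1 z (Hnz z hz)) as hN.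
  unfold in_H in hz. revert HM hz. generalize (Im z) as y. intros y HM hz.
  unfold NN in *. destruct (phi1 z) as [u v]. destruct (phi2 z) as [p q].
  unfold Re, Im in *; cbn [fst snd] in *.
  assert (E : Cmod (Cdiv (p,q) (u,v)) = sqrt ((p^2+q^2)/(u*u+v*v))).
  { unfold Cmod, Cdiv, Cmul, Cinv, Re, Im; simpl. f_equal. field. lra. }
  rewrite E in HM.
  set (X := (p^2+q^2)/(u*u+v*v)) in *.
  assert (hX : 0 <= X) by (unfold X; unfold Rdiv; apply Rmult_le_pos; [nra|left; apply Rinv_0_lt_compat; lra]).
  pose proof (sqrt_pos X). pose proof (sqrt_sqrt X hX).
  assert (hM : 0 <= M) by nra.
  assert (h1 : y^2 * X <= M^2).
  { replace (y^2*X) with ((y*sqrt X)^2) by (rewrite <- H0 at 2; ring).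
    apply pow_incr; split; nra. }
  assert (EX : X*(u*u+v*v) = p^2+q^2) by (unfold X; field; lra).
  rewrite <- EX. replace (y^2*(X*(u*u+v*v))) with (y^2*X*(u*u+v*v)) by ring.
  apply Rmult_le_compat_r; lra.
Qed.

Lemma incr f f' a b : a < b -> (forall c, a <= c <= b -> derivable_pt_lim f c (f' c)) ->
  (forall c, a <= c <= b -> 0 < f' c) -> f a < f b.
Proof.
  intros. destruct (MVT_cor2 f f' a b H H0) as [c [E hc]].
  assert (0 < f' c) by (apply H1; lra). nra.
Qed.

Lemma posK (phi1 phi2 : Cx -> Cx) M (Hnz : forall z, in_H z -> phi1 z <> C0)
  (HM : forall z, in_H z -> Im z * Cmod (Cdiv (phi2 z) (phi1 z)) <= M)
  (hM0 : 0 <= M) (hM : M < 1/2) x c : 0 < c ->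
  let p := (x + c*0, 0 + c*1) in
  0 < 1 * NN phi1 p + (0 + c*1) * (2 * (Re (phi1 p) * Re (Cmul (phi2 p) (0,1))
        + Im (phi1 p) * Im (Cmul (phi2 p) (0,1)))).
Proof.
  intros hc p. assert (hp : in_H p) by (unfold in_H, p, Im; simpl; lra).
  pose proof (bound phi1 phi2 M Hnz HM p hp) as B.
  pose proof (NN_pos phi1 p (Hnz p hp)) as hN.
  unfold NN in *. assert (hy : Im p = 0 + c*1) by reflexivity. rewrite hy in B.
  assert (hy' : 0 < 0 + c*1) by lra. revert B hy'. generalize (0 + c*1) as y. intros y B hy'.
  destruct (phi1 p) as [u v]. destruct (phi2 p) as [s t].
  unfold Cmul, Re, Im in *; cbn [fst snd] in *.
  apply (pos_vert u v s t y M); auto.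
Qed.

Lemma posG (phi1 phi2 : Cx -> Cx) M (Hnz : forall z, in_H z -> phi1 z <> C0)
  (HM : forall z, in_H z -> Im z * Cmod (Cdiv (phi2 z) (phi1 z)) <= M)
  (hM0 : 0 <= M) (hM : M < 1/2) x0 y0 a b c : 0 < y0 + c*b -> 0 < b -> a^2 <= b^2 ->
  let p := (x0 + c*a, y0 + c*b) in
  0 < b * ((y0 + c*b) * NN phi1 p) + (y0 + c*b) * (b * NN phi1 p + (y0 + c*b) *
      (2 * (Re (phi1 p) * Re (Cmul (phi2 p) (a,b)) + Im (phi1 p) * Im (Cmul (phi2 p) (a,b))))).
Proof.
  intros hc hb hab p. assert (hp : in_H p) by (unfold in_H, p, Im; simpl; lra).
  pose proof (bound phi1 phi2 M Hnz HM p hp) as B.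
  pose proof (NN_pos phi1 p (Hnz p hp)) as hN.
  unfold NN in *. assert (hy : Im p = y0 + c*b) by reflexivity. rewrite hy in B.
  revert B hc. generalize (y0 + c*b) as y. intros y B hy'.
  destruct (phi1 p) as [u v]. destruct (phi2 p) as [s t].
  unfold Cmul, Re, Im in *; cbn [fst snd] in *.
  apply (pos_diag u v s t a b y M); auto.
Qed.

Definition Kf (phi1 : Cx -> Cx) x y := y * NN phi1 (x, y).
Definition Gf (phi1 : Cx -> Cx) x y := y * (y * NN phi1 (x, y)).

Theorem lemma4p1
  (phi phi1 phi2 : Cx -> Cx)
  (Hphi : forall z, in_H z -> has_cderiv phi z (phi1 z))
  (Hphi1 : forall z, in_H z -> has_cderiv phi1 z (phi2 z))
  (Hnz : forall z, in_H z -> phi1 z <> C0)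
  (Hsup : exists M : R, M < 1 / 2 /\
     forall z, in_H z -> Im z * Cmod (Cdiv (phi2 z) (phi1 z)) <= M)
  (alpha : R) (Halpha : 0 < alpha) :
  exists f : R -> R,
    (forall x, 0 < f x) /\ Lipschitz f /\
    (forall x y : R, 0 < y ->
       (y * Cmod (phi1 (x, y)) = alpha <-> y = f x)).
Proof.
  destruct Hsup as [M [hM HM]].
  assert (hM0 : 0 <= M).
  { assert (h01 : in_H (0,1)) by (unfold in_H, Im; simpl; lra).
    pose proof (HM _ h01). unfold Im in H; simpl in H.
    pose proof (sqrt_pos (Re (Cdiv (phi2 (0, 1)) (phi1 (0, 1))) ^ 2 + Im (Cdiv (phi2 (0, 1)) (phi1 (0, 1))) ^ 2)).
    unfold Cmod in H. lra. }
  assert (Kpos : forall x y, 0 < y -> 0 < Kf phi1 x y).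
  { intros x y hy. unfold Kf. apply Rmult_lt_0_compat; auto. apply NN_pos, Hnz. exact hy. }
  assert (Kinc : forall x y1 y2, 0 < y1 < y2 -> Kf phi1 x y1 < Kf phi1 x y2).
  { intros x y1 y2 hy.
    assert (EK : forall s, Kf phi1 x s = (0 + s*1) * NN phi1 (x + s*0, 0 + s*1)).
    { intro s. unfold Kf. replace (x + s*0, 0 + s*1) with (x, s) by (f_equal; ring). ring. }
    rewrite !EK.
    apply (incr (fun s => (0 + s*1) * NN phi1 (x + s*0, 0 + s*1))
      (fun c => 1 * NN phi1 (x + c*0, 0 + c*1) + (0 + c*1) * (2 * (Re (phi1 (x + c*0, 0 + c*1)) * Re (Cmul (phi2 (x + c*0, 0 + c*1)) (0,1))
        + Im (phi1 (x + c*0, 0 + c*1)) * Im (Cmul (phi2 (x + c*0, 0 + c*1)) (0,1)))))).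
    - lra.
    - intros c hc. exact (dmul _ _ _ _ _ (daff 0 1 c) (dNN phi1 phi2 x 0 0 1 c Hphi1 Rlt_0_1 ltac:(lra))).
    - intros c hc. apply (posK phi1 phi2 M Hnz HM hM0 hM x c). lra. }
  assert (GK : forall x y, Gf phi1 x y = y * Kf phi1 x y) by (intros; unfold Gf, Kf; ring).
  assert (Ginc : forall x y1 y2, 0 < y1 < y2 -> Gf phi1 x y1 < Gf phi1 x y2).
  { intros x y1 y2 hy. rewrite !GK. pose proof (Kinc x y1 y2 hy). pose proof (Kpos x y1 ltac:(lra)).
    nra. }
  assert (Gdiag : forall x1 x2 y1, 0 < y1 -> Gf phi1 x1 y1 <= Gf phi1 x2 (y1 + Rabs (x2 - x1))).
  { intros x1 x2 y1 hy.
    destruct (Req_dec x2 x1) as [->|hne].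
    { rewrite Rminus_diag, Rabs_R0, Rplus_0_r. lra. }
    set (a := x2 - x1). set (b := Rabs a).
    assert (hb : 0 < b) by (unfold b; apply Rabs_pos_lt; unfold a; lra).
    assert (hab : a^2 <= b^2) by (unfold b; rewrite pow2_abs; lra).
    assert (E0 : Gf phi1 x1 y1 = (y1 + 0*b) * ((y1 + 0*b) * NN phi1 (x1 + 0*a, y1 + 0*b))).
    { unfold Gf. replace (x1 + 0*a, y1 + 0*b) with (x1, y1) by (f_equal; ring). ring_simplify. reflexivity. }
    assert (E1 : Gf phi1 x2 (y1 + b) = (y1 + 1*b) * ((y1 + 1*b) * NN phi1 (x1 + 1*a, y1 + 1*b))).
    { unfold Gf. replace (x1 + 1*a, y1 + 1*b) with (x2, y1 + b) by (unfold a; f_equal; ring).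
      replace (y1 + 1*b) with (y1 + b) by ring. reflexivity. }
    rewrite E0, E1. left.
    apply (incr (fun s => (y1 + s*b) * ((y1 + s*b) * NN phi1 (x1 + s*a, y1 + s*b)))
      (fun c => b * ((y1 + c*b) * NN phi1 (x1 + c*a, y1 + c*b)) + (y1 + c*b) * (b * NN phi1 (x1 + c*a, y1 + c*b) + (y1 + c*b) *
      (2 * (Re (phi1 (x1 + c*a, y1 + c*b)) * Re (Cmul (phi2 (x1 + c*a, y1 + c*b)) (a,b)) + Im (phi1 (x1 + c*a, y1 + c*b)) * Im (Cmul (phi2 (x1 + c*a, y1 + c*b)) (a,b))))))).
    - lra.
    - intros c hc. assert (0 < y1 + c*b) by nra.
      exact (dmul _ _ _ _ _ (daff y1 b c) (dmul _ _ _ _ _ (daff y1 b c) (dNN phi1 phi2 x1 y1 a b c Hphi1 hb H))).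
    - intros c hc. apply (posG phi1 phi2 M Hnz HM hM0 hM x1 y1 a b c); auto. nra. }
  assert (Gcont : forall x, continuity (fun s => Gf phi1 x (exp s) - alpha^2)).
  { intros x s. apply derivable_continuous_pt.
    assert (EG : forall y, Gf phi1 x y = (0 + y*1) * ((0 + y*1) * NN phi1 (x + y*0, 0 + y*1))).
    { intro y. unfold Gf. replace (x + y*0, 0 + y*1) with (x, y) by (f_equal; ring). ring. }
    set (Fv := fun y => (0 + y*1) * ((0 + y*1) * NN phi1 (x + y*0, 0 + y*1))).
    assert (he : 0 < 0 + exp s * 1) by (pose proof (exp_pos s); lra).
    pose proof (dmul _ _ _ _ _ (daff 0 1 (exp s)) (dmul _ _ _ _ _ (daff 0 1 (exp s)) (dNN phi1 phi2 x 0 0 1 (exp s) Hphi1 Rlt_0_1 he))) as D.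
    pose proof (derivable_pt_lim_comp exp Fv s _ _ (derivable_pt_lim_exp s) D) as D2.
    pose proof (derivable_pt_lim_minus _ (fct_cte (alpha^2)) s _ _ D2 (derivable_pt_lim_const (alpha^2) s)) as D3.
    replace (fun s => Gf phi1 x (exp s) - alpha^2) with (fun s => Fv (exp s) - alpha^2)
      by (apply functional_extensionality; intro; rewrite EG; reflexivity).
    exact (exist _ _ D3). }
  assert (Ex : forall x, exists y, 0 < y /\ Gf phi1 x y = alpha^2).
  { intro x. set (k := Kf phi1 x 1). assert (hk : 0 < k) by (apply Kpos; lra).
    set (lo := Rmin 1 (alpha^2/(2*k))). set (hi := Rmax 1 (2*alpha^2/k)).
    assert (ha2 : 0 < alpha^2) by (apply pow_lt; lra).
    assert (hlo : 0 < lo) by (apply Rmin_glb_lt; [lra| apply Rdiv_lt_0_compat; lra]).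
    assert (hlo1 : lo <= 1) by apply Rmin_l.
    assert (hlo2 : lo <= alpha^2/(2*k)) by apply Rmin_r.
    assert (hhi1 : 1 <= hi) by apply Rmax_l.
    assert (hhi2 : 2*alpha^2/k <= hi) by apply Rmax_r.
    assert (Klo : Kf phi1 x lo <= k).
    { destruct (Rle_lt_or_eq_dec _ _ hlo1) as [hl|hl]; [left; apply Kinc; lra| rewrite hl; right; reflexivity]. }
    assert (Khi : k <= Kf phi1 x hi).
    { destruct (Rle_lt_or_eq_dec _ _ hhi1) as [hl|hl]; [left; apply Kinc; lra| rewrite <- hl; right; reflexivity]. }
    assert (Glo : Gf phi1 x lo < alpha^2).
    { rewrite GK. apply Rle_lt_trans with (lo * k). { apply Rmult_le_compat_l; lra. }
      apply Rle_lt_trans with (alpha^2/(2*k) * k). { apply Rmult_le_compat_r; lra. }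
      replace (alpha^2/(2*k)*k) with (alpha^2/2) by (field; lra). lra. }
    assert (Ghi : alpha^2 < Gf phi1 x hi).
    { rewrite GK. apply Rlt_le_trans with (2*alpha^2/k * k).
      { replace (2*alpha^2/k*k) with (2*alpha^2) by (field; lra). lra. }
      apply Rle_trans with (hi * k). { apply Rmult_le_compat_r; lra. }
      apply Rmult_le_compat_l; lra. }
    assert (hlt : lo < hi).
    { destruct (Rle_lt_dec hi lo); [|auto]. assert (lo = hi) by lra. rewrite H in Glo. lra. }
    destruct (IVT (fun s => Gf phi1 x (exp s) - alpha^2) (ln lo) (ln hi) (Gcont x)
      (ln_increasing lo hi hlo hlt)) as [z [hz1 hz2]].
    { rewrite exp_ln by lra. lra. }
    { rewrite exp_ln by lra. lra. }
    exists (exp z). split; [apply exp_pos | lra]. }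
  set (f := fun x => proj1_sig (constructive_indefinite_description _ (Ex x))).
  assert (Fp : forall x, 0 < f x /\ Gf phi1 x (f x) = alpha^2).
  { intro x. unfold f. exact (proj2_sig (constructive_indefinite_description _ (Ex x))). }
  assert (uniq : forall x y, 0 < y -> Gf phi1 x y = alpha^2 -> y = f x).
  { intros x y hy hG. destruct (Fp x) as [h1 h2].
    destruct (Rtotal_order y (f x)) as [h|[h|h]]; auto.
    - pose proof (Ginc x y (f x) (conj hy h)). lra.
    - pose proof (Ginc x (f x) y (conj h1 h)). lra. }
  assert (ub : forall x1 x2, f x2 <= f x1 + Rabs (x2 - x1)).
  { intros x1 x2. destruct (Rle_lt_dec (f x2) (f x1 + Rabs (x2 - x1))) as [h|h]; auto.
    exfalso. destruct (Fp x1) as [a1 a2]. destruct (Fp x2) as [b1 b2].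
    pose proof (Rabs_pos (x2 - x1)).
    pose proof (Ginc x2 (f x1 + Rabs (x2 - x1)) (f x2) ltac:(split; lra)).
    pose proof (Gdiag x1 x2 (f x1) a1). lra. }
  exists f. split; [intro; apply Fp|split].
  - exists 1. intros x y. rewrite Rmult_1_l. apply Rabs_le.
    pose proof (ub x y). pose proof (ub y x). rewrite Rabs_minus_sym in H. lra.
  - intros x y hy.
    assert (EC : Cmod (phi1 (x,y)) = sqrt (NN phi1 (x,y))) by (unfold Cmod, NN; f_equal; ring).
    assert (hN : 0 < NN phi1 (x,y)) by (apply NN_pos, Hnz; exact hy).
    pose proof (sqrt_pos (NN phi1 (x,y))). pose proof (sqrt_sqrt _ (Rlt_le _ _ hN)).
    assert (EGf : Gf phi1 x y = (y * Cmod (phi1 (x,y)))^2).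
    { rewrite EC. unfold Gf. replace ((y * sqrt (NN phi1 (x,y)))^2) with (y*y*(sqrt (NN phi1 (x,y)) * sqrt (NN phi1 (x,y)))) by ring. rewrite H0. ring. }
    split.
    + intro h. apply uniq; auto. rewrite EGf, h. reflexivity.
    + intro h. rewrite h in EGf. rewrite <- h in EGf. destruct (Fp x) as [_ h2].
      rewrite <- h in h2. rewrite EGf in h2.
      apply Rsqr_inj. rewrite EC; apply Rmult_le_pos; lra. lra.
      unfold Rsqr. rewrite <- !Rsqr_pow2 in h2. unfold Rsqr in h2. lra.
Qed.
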